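(* Let $H$ be a graph, $v\in V(H)$, and let $G$ be the graph obtained from $H$ by attaching a path at $v$: new vertices $v_1,\ldots,v_m$ are added together with the edges $\{v_{i},v_{i+1}\}$ for $i=0,\ldots,m-1$, where $v_0=v$. If $A\in\mathcal{S}(G)$, $X\in\overline{\mathcal{S}_0}(G^c)$, and $AX-XA=0$, then $X\in\overline{\mathcal{S}_0}(G'^c)$, where $G'=G+\{\{v_i,v_j\}: 0\le i<j\le m\}$; that is, $x_{v_iv_j}=0$ for all $0\le i<j\le m$.
   Context: All graphs are finite, simple, undirected. For a graph $G$ on $n$ vertices labelled $1,\ldots,n$, $\mathcal{S}(G)$ is the set of real symmetric $n\times n$ matrices $A=(a_{ij})$ with $a_{ij}\neq0$ iff $\{i,j\}\in E(G)$ for $i\neq j$ (diagonal arbitrary). For a graph $K$ on the same vertex set, $\overline{\mathcal{S}_0}(K)$ is the set of real symmetric matrices whose $(i,j)$ entry is zero whenever $i=j$ or $\{i,j\}\notin E(K)$; $K^c$ is the complement of $K$. $G+F$ denotes the graph obtained from $G$ by adding the edge set $F$. *)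

(* Defs.v *)
From HB Require Import structures.
From mathcomp Require Import all_boot all_order all_algebra.
Set Implicit Arguments. Unset Strict Implicit. Unset Printing Implicit Defensive.
Import Order.TTheory GRing.Theory Num.Theory.
Local Open Scope ring_scope.

Definition simple_graph (T : finType) (e : rel T) : Prop :=
  symmetric e /\ irreflexive e.

Definition compl_graph (T : finType) (e : rel T) : rel T :=
  fun i j => (i != j) && ~~ e i j.

Definition S_graph (R : realFieldType) (N : nat) (e : rel 'I_N)
    (A : 'M[R]_N) : Prop :=
  A^T = A /\ forall i j : 'I_N, i != j -> (A i j != 0) = e i j.

Definition S0bar (R : realFieldType) (N : nat) (e : rel 'I_N)
    (X : 'M[R]_N) : Prop :=
  X^T = X /\ forall i j : 'I_N, (i == j) || ~~ e i j -> X i j = 0.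

(* Attaching a path at v : 'I_n with m new vertices.  The new graph lives on
   'I_(n + m): old vertex a is [lshift m a], new vertex v_k (1 <= k <= m) is
   [rshift n (k-1)]. *)
Definition attach_path (n m : nat) (eH : rel 'I_n) (v : 'I_n) : rel 'I_(n + m) :=
  fun x y =>
    match split x, split y with
    | inl a, inl b => eH a b
    | inl a, inr j => (a == v) && (nat_of_ord j == 0%N)
    | inr j, inl a => (a == v) && (nat_of_ord j == 0%N)
    | inr i, inr j => (i.+1 == j :> nat) || (j.+1 == i :> nat)
    end.

Definition path_vertex (n m : nat) (v : 'I_n) (k : 'I_m.+1) : 'I_(n + m) :=
  if nat_of_ord k == 0%N then lshift m v
  else insubd (lshift m v) (n + k.-1)%N.

Definition add_path_clique (n m : nat) (v : 'I_n) (e : rel 'I_(n + m))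
  : rel 'I_(n + m) :=
  fun x y => e x y ||
    [exists k : 'I_m.+1, exists l : 'I_m.+1,
       (k < l)%N &&
       (((x == path_vertex v k) && (y == path_vertex v l)) ||
        ((y == path_vertex v k) && (x == path_vertex v l)))].

(* Main.v *)
Require Import Defs.
From HB Require Import structures.
From mathcomp Require Import all_boot all_order all_algebra.
From mathcomp Require Import zify.
Import Order.TTheory GRing.Theory Num.Theory.
Local Open Scope ring_scope.

Section S.
Variables (n m : nat) (eH : rel 'I_n) (v : 'I_n).

Definition pv (k : nat) : 'I_(n + m) :=
  if k is k'.+1 then insubd (lshift m v) (n + k') else lshift m v.

Lemma val_pv0 : nat_of_ord (pv 0) = nat_of_ord v. Proof. by []. Qed.
Lemma val_pvS k : (k < m)%N -> nat_of_ord (pv k.+1) = (n + k)%N.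
Proof. move=> hk; rewrite /= val_insubd; case: ifP => //; lia. Qed.

Arguments pv : simpl never.
Lemma pv_inj k l : (k <= m)%N -> (l <= m)%N -> pv k = pv l -> k = l.
Proof.
move=> hk hl /(congr1 (@nat_of_ord _)).
case: k hk => [|k] hk; case: l hl => [|l] hl.
- by [].
- rewrite val_pv0 val_pvS //; have := ltn_ord v; lia.
- rewrite val_pv0 val_pvS //; have := ltn_ord v; lia.
- rewrite !val_pvS //; lia.
Qed.

Lemma pv_neq k l : (k <= m)%N -> (l <= m)%N -> k != l -> pv k != pv l.
Proof. move=> hk hl /eqP hkl; apply/eqP => /pv_inj; auto. Qed.

Local Notation G := (@attach_path n m eH v).

Lemma splitS k (hk : (k < m)%N) : split (pv k.+1) = inr (Ordinal hk).
Proof.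
case: splitP => [a Ha|t Ht].
- exfalso; move: Ha; rewrite val_pvS //; have := ltn_ord a; lia.
- congr inr; apply: val_inj => /=; move: Ht; rewrite val_pvS //; lia.
Qed.

Lemma split0 : split (pv 0) = inl v.
Proof.
case: splitP => [a Ha|t Ht].
- by congr inl; apply: val_inj.
- exfalso; move: Ht; rewrite val_pv0; have := ltn_ord v; lia.
Qed.

Lemma edge1 k : (k < m)%N -> G (pv k.+1) (pv k).
Proof.
move=> hk; rewrite /attach_path splitS.
case: k hk => [|k] hk; first by rewrite split0 eqxx.
rewrite splitS; first lia. by move=> ? /=; rewrite eqxx orbT.
Qed.

Lemma edge2 k : (k < m)%N -> G (pv k) (pv k.+1).
Proof.
move=> hk; rewrite /attach_path splitS.
case: k hk => [|k] hk; first by rewrite split0 eqxx.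
rewrite splitS; first lia. by move=> ? /=; rewrite eqxx ?orbT.
Qed.

Lemma nbr k x : (k < m)%N -> G (pv k.+1) x ->
  x = pv k \/ ((k.+1 < m)%N /\ x = pv k.+2).
Proof.
move=> hk; rewrite /attach_path splitS.
case: splitP => [a Ha|t Ht].
- case/andP => /eqP av /= /eqP k0; subst; left; apply: ord_inj; by rewrite Ha val_pv0.
- move=> /= /orP [/eqP e|/eqP e].
  + right; split; first by have := ltn_ord t; lia.
    apply: ord_inj; rewrite Ht val_pvS; [lia|]; have := ltn_ord t; lia.
  + left; case: k hk e => [|k] hk e; first by [].
    apply: ord_inj; rewrite Ht val_pvS; lia.
Qed.


Lemma nbr_sum (R : realFieldType) (A : 'M[R]_(n + m)) (g : 'I_(n + m) -> R) k :
  S_graph G A -> (k < m)%N ->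
  \sum_x A (pv k.+1) x * g x =
  A (pv k.+1) (pv k.+1) * g (pv k.+1) + A (pv k.+1) (pv k) * g (pv k) +
  (if (k.+1 < m)%N then A (pv k.+1) (pv k.+2) * g (pv k.+2) else 0).
Proof.
move=> [_ hAe] hk.
have n10 : pv k != pv k.+1 by apply: pv_neq; lia.
rewrite (bigD1 (pv k.+1)) //= (bigD1 (pv k)) /=; last by rewrite n10.
rewrite !addrA; case: ifP => hk1.
- rewrite (bigD1 (pv k.+2)) /=; last first.
    by rewrite !pv_neq //; lia.
  rewrite big1 ?addr0 //.
  move=> x /andP [/andP [h1 h2] h3].
  have : ~~ (A (pv k.+1) x != 0).
    by rewrite hAe 1?eq_sym //; apply/negP => /nbr [] // => [/eqP|[_ /eqP]]; rewrite ?(negbTE h2) ?(negbTE h3).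
  by rewrite negbK => /eqP ->; rewrite mul0r.
- rewrite big1 ?addr0 //.
  move=> x /andP [h1 h2].
  have : ~~ (A (pv k.+1) x != 0).
    rewrite hAe 1?eq_sym //; apply/negP => /nbr [] // => [/eqP|[]]; rewrite ?(negbTE h2) ?hk1 //.
  by rewrite negbK => /eqP ->; rewrite mul0r.
Qed.

End S.

Arguments pv {n m} v k.

Section T.
Variables (R : realFieldType) (n m : nat) (eH : rel 'I_n) (v : 'I_n)
    (A X : 'M[R]_(n + m)).
Local Notation G := (@attach_path n m eH v).
Local Notation p := (@pv n m v).
Hypothesis hA : S_graph G A.
Hypothesis hX : S0bar (compl_graph G) X.
Hypothesis hC : A *m X - X *m A = 0.

Lemma Xsym i j : X i j = X j i.
Proof. by case: hX => hXT _; rewrite -{1}hXT mxE. Qed.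

Lemma XG i j : G i j -> X i j = 0.
Proof. by case: hX => _ h e; apply: h; rewrite /compl_graph e andbF orbT. Qed.

Lemma Xd i : X i i = 0.
Proof. by case: hX => _ h; apply: h; rewrite eqxx. Qed.

Lemma entry j i : (j < m)%N -> (i < m)%N ->
  \sum_x A (p j.+1) x * X x (p i.+1) = \sum_x A (p i.+1) x * X (p j.+1) x.
Proof.
move=> hj hi.
have hAC : A *m X = X *m A by apply/eqP; rewrite -subr_eq0 hC.
have := congr1 (fun M : 'M[R]_(n + m) => M (p j.+1) (p i.+1)) hAC; rewrite !mxE => ->.
apply: eq_bigr => x _; rewrite mulrC; congr (_ * _).
by case: hA => hAT _; rewrite -{1}hAT mxE.
Qed.

Lemma claim d j : (d <= j <= m)%N -> X (p j) (p (j - d)) = 0.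
Proof.
elim/ltn_ind: d j => d IHd j /andP[hdj hjm].
case: d IHd hdj => [|[|d']] IHd hdj.
- by rewrite subn0 Xd.
- case: j hdj hjm => [|j] // _ hjm; rewrite subSS subn0; apply: XG; exact: edge1.
have step : forall l, ((l + d').+2 <= m)%N ->
    (((l+d').+2 < m)%N -> X (p (l+d').+3) (p l.+1) = 0) ->
    X (p (l+d').+2) (p l) = 0.
  move=> l hm hnext.
  have E := entry ((l+d').+1) l ltac:(lia) ltac:(lia).
  rewrite (@nbr_sum _ _ _ _ _ _ _ _ hA) in E; last lia.
  rewrite (@nbr_sum _ _ _ _ _ _ _ _ hA) in E; last lia.
  have z1 : X (p (l+d').+2) (p l.+1) = 0.
    have := IHd d'.+1 ltac:(lia) (l+d').+2 ltac:(lia).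
    by rewrite (_ : ((l + d').+2 - d'.+1)%N = l.+1) //; lia.
  have z2 : X (p (l+d').+1) (p l.+1) = 0.
    have := IHd d' ltac:(lia) (l+d').+1 ltac:(lia).
    by rewrite (_ : ((l + d').+1 - d')%N = l.+1) //; lia.
  have z4 : X (p (l+d').+2) (p l.+2) = 0.
    have := IHd d' ltac:(lia) (l+d').+2 ltac:(lia).
    by rewrite (_ : ((l + d').+2 - d')%N = l.+2) //; lia.
  have z3 : (if ((l+d').+2 < m)%N then A (p (l+d').+2) (p (l+d').+3) * X (p (l+d').+3) (p l.+1) else 0) = 0.
    by case: ifP => // h; rewrite hnext // mulr0.
  have z5 : (if (l.+1 < m)%N then A (p l.+1) (p l.+2) * X (p (l+d').+2) (p l.+2) else 0) = 0.
    by case: ifP => // h; rewrite z4 mulr0.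
  rewrite z3 z5 z1 z2 !mulr0 !addr0 !add0r in E.
  move/esym/eqP: E; rewrite mulf_eq0 => /orP [|/eqP //].
  case: hA => _ hAe; rewrite -[_ == 0]negbK hAe; last by apply: pv_neq; lia.
  by rewrite edge1 //; lia.
move: hjm; move Ej: (m - j)%N => t.
elim: t j Ej hdj => [|t IHt] j Ej hdj hjm.
- have ej : j = ((j - d'.+2) + d').+2 by lia.
  rewrite {1}ej; apply: step; first lia.
  lia.
- have ej : j = ((j - d'.+2) + d').+2 by lia.
  rewrite {1}ej; apply: step; first lia.
  move=> hlt; have := IHt j.+1 ltac:(lia) ltac:(lia) ltac:(lia).
  rewrite (_ : (j.+1 - d'.+2 = (j - d'.+2).+1)%N); last lia.
  by rewrite (_ : j.+1 = (j - d'.+2 + d').+3); last lia.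
Qed.

End T.

Theorem corollary3p7 (R : realFieldType) (n m : nat) (eH : rel 'I_n) (v : 'I_n)
    (A X : 'M[R]_(n + m)) :
  simple_graph eH ->
  S_graph (@attach_path n m eH v) A ->
  S0bar (compl_graph (@attach_path n m eH v)) X ->
  A *m X - X *m A = 0 ->
  S0bar (compl_graph (@add_path_clique n m v (@attach_path n m eH v))) X.
Proof.
move=> _ hA hX hC; split; first by case: hX.
move=> i j H.
case: (eqVneq i j) => [->|ne]; first exact: (@Xd _ _ _ _ _ _ hX).
move: H; rewrite /compl_graph /add_path_clique ne /= negbK (negbTE ne) /=.
case/orP => [H1|/existsP [k /existsP [l /andP [kl H]]]].
  exact: (@XG _ _ _ _ _ _ hX _ _ H1).
have pvE : forall k0 : 'I_m.+1, path_vertex v k0 = pv v k0 by case => [[|k0] hk0].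
rewrite !pvE in H.
have hc := @claim _ _ _ _ _ _ _ hA hX hC (l - k)%N l ltac:(have := ltn_ord l; lia).
rewrite (_ : (l - (l - k) = k)%N) in hc; last lia.
by case/orP: H => /andP [/eqP -> /eqP ->] //; rewrite (@Xsym _ _ _ _ _ _ hX).
Qed.
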